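(* Let $d\ge2$, $p\ge1$ and $k\in\mathbb{N}$ with $k\ge d^{6p}$. Define $\phi:\mathcal{C}_k^{(d)}\to\mathbb{R}$ by $$\phi(T):=1-\prod_{m=1}^\infty\frac{N_{\le m(p-1)}(T)}{dk+1}.$$ Then for every $T\in\mathcal{C}_k^{(d)}$, $|1-\phi(T)|\le\exp(-c_{d,p}\log^2k)$, where $c_{d,p}:=(4p\log d)^{-1}$.
   Context: A $d$-Catalan tree is a rooted planar tree in which each vertex has $0$ or $d$ children; $\mathcal{C}_k^{(d)}$ is the set of those with $k$ internal vertices (so $dk+1$ vertices in total). $N_j(T)$ is the number of vertices at distance $j$ from the root and $N_{\le q}(T)=\sum_{0\le j\le q}N_j(T)$. *)

(* Defs.v *)
From HB Require Import structures.
From mathcomp Require Import all_boot all_order all_algebra.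
From mathcomp Require Import all_classical all_reals all_analysis.
Set Implicit Arguments. Unset Strict Implicit. Unset Printing Implicit Defensive.
Import Order.TTheory GRing.Theory Num.Theory.
Import numFieldNormedType.Exports.

(* Rooted planar (ordered) trees: a vertex with its ordered list of children.
   A leaf is [Node [::]]. *)
Inductive tree := Node of seq tree.

Fixpoint is_dcatalan (d : nat) (t : tree) : bool :=
  let: Node ts := t in
  ((size ts == 0) || (size ts == d)) && all (is_dcatalan d) ts.

Fixpoint internal (t : tree) : nat :=
  let: Node ts := t in (size ts != 0) + sumn (map internal ts).

Definition in_Ck (d k : nat) (t : tree) : bool := is_dcatalan d t && (internal t == k).

Fixpoint Nlev (t : tree) (j : nat) : nat :=
  let: Node ts := t in
  if j is j'.+1 then sumn (map (fun s => Nlev s j') ts) else 1.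

Definition Nle (t : tree) (q : nat) : nat := \sum_(0 <= j < q.+1) Nlev t j.

Local Open Scope ring_scope.

Definition infprod1 (R : realType) (u : nat -> R) : R :=
  limn (fun M : nat => \prod_(1 <= m < M.+1) u m).

Definition phi (R : realType) (d p k : nat) (t : tree) : R :=
  1 - infprod1 (fun m => (Nle t (m * (p - 1)))%:R / (d * k + 1)%:R).

Definition cdp (R : realType) (d p : nat) : R := (4 * p%:R * ln (d%:R : R))^-1.

(* Main.v *)
Require Import Defs.
From HB Require Import structures.
From mathcomp Require Import all_boot all_order all_algebra.
From mathcomp Require Import all_classical all_reals all_analysis.
Import Order.TTheory GRing.Theory Num.Theory.
Import numFieldNormedType.Exports.
From mathcomp Require Import zify ring lra.
Local Open Scope nat_scope.
Fixpoint tree_ind2 (P : tree -> Prop)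
  (H : forall ts, (forall s, Stdlib.Lists.List.In s ts -> P s) -> P (Node ts)) (t : tree) : P t :=
  let: Node ts := t in
  H ts ((fix F (l : seq tree) : forall s, Stdlib.Lists.List.In s l -> P s :=
     match l return forall s, Stdlib.Lists.List.In s l -> P s with
     | nil => fun s f => False_ind (P s) f
     | cons s0 l' => fun s Hin =>
         match Hin with
         | or_introl e => eq_ind s0 P (tree_ind2 P H s0) s e
         | or_intror h => F l' s h
         end
     end) ts).

Fixpoint vert (t : tree) : nat := let: Node ts := t in (sumn (map vert ts)).+1.

Lemma sumn_map_le (A : Type) (f g : A -> nat) ts :
  (forall s, Stdlib.Lists.List.In s ts -> f s <= g s) -> sumn (map f ts) <= sumn (map g ts).
Proof.
elim: ts => [|s ts IH] //= H; apply: leq_add; first by apply: H; left.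
by apply: IH => s' Hs; apply: H; right.
Qed.

Lemma sumn_map_eq (A : Type) (f g : A -> nat) ts :
  (forall s, Stdlib.Lists.List.In s ts -> f s = g s) -> sumn (map f ts) = sumn (map g ts).
Proof.
elim: ts => [|s ts IH] //= H; rewrite H; last by left.
by rewrite IH // => s' Hs; apply: H; right.
Qed.

Lemma sumn_map_const (A : Type) c (ts : seq A) : sumn (map (fun _ => c) ts) = size ts * c.
Proof. by elim: ts => //= s ts ->; rewrite mulSn. Qed.

Lemma dcat_all d ts : is_dcatalan d (Node ts) -> forall s, Stdlib.Lists.List.In s ts -> is_dcatalan d s.
Proof.
move=> /= /andP [_ H] s; elim: ts H => [|s0 ts IH] //= /andP [H1 H2] [<-|Hs] //.
exact: IH.
Qed.

Lemma Nlev_le d t : is_dcatalan d t -> forall j, Nlev t j <= d ^ j.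
Proof.
elim/tree_ind2: t => ts IH Hd [|j] //=.
have H1 := @dcat_all d ts Hd.
apply: (@leq_trans (sumn (map (fun _ => d ^ j) ts))).
  by apply: sumn_map_le => s Hs; apply: IH => //; apply: H1.
rewrite sumn_map_const expnS leq_mul2r.
by move: Hd => /= /andP [/orP [/eqP ->|/eqP ->] _]; rewrite ?leq0n ?leqnn orbT.
Qed.

Lemma vert_dcat d t : is_dcatalan d t -> vert t = d * internal t + 1.
Proof.
elim/tree_ind2: t => ts IH Hd /=.
have H1 := @dcat_all d ts Hd.
rewrite (@sumn_map_eq _ _ (fun s => d * internal s + 1)); last first.
  by move=> s Hs; apply: IH => //; apply: H1.
have -> : sumn [seq d * internal s + 1 | s <- ts] = d * sumn (map internal ts) + size ts.
  elim: ts {IH Hd H1} => [|s ts IHt] /=; first by rewrite muln0.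
  rewrite IHt mulnDr; lia.
move: Hd => /= /andP [/orP [/eqP Hs|/eqP ->] _].
  case: ts {IH H1} Hs => // _; rewrite /= ?muln0 //.
case: d {IH H1} => [|d] /=; first by rewrite !mul0n.
rewrite mulnDr muln1; lia.
Qed.

Lemma Nlesum_le t q : \sum_(0 <= j < q) Nlev t j <= vert t.
Proof.
elim/tree_ind2: t q => ts IH [|q]; first by rewrite big_geq.
rewrite big_nat_recl //= add1n ltnS.
have -> : \sum_(0 <= i < q) sumn [seq Nlev s i | s <- ts] =
          sumn [seq \sum_(0 <= i < q) Nlev s i | s <- ts].
  elim: ts {IH} => [|s ts IHt] /=; first by rewrite big1.
  by rewrite big_split /= IHt.
by apply: sumn_map_le => s Hs; apply: IH.
Qed.

Lemma geom_le d q : 2 <= d -> \sum_(0 <= j < q.+1) d ^ j <= 2 * d ^ q.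
Proof.
move=> Hd; elim: q => [|q IH]; first by rewrite big_nat1.
rewrite big_nat_recr //= expnS.
apply: (@leq_trans (2 * d ^ q + d * d ^ q)); first by rewrite leq_add2r.
have : 2 * d ^ q <= d * d ^ q by rewrite leq_mul2r Hd orbT.
lia.
Qed.

Lemma Nle_le2 d t q : is_dcatalan d t -> 2 <= d -> Nle t q <= 2 * d ^ q.
Proof.
move=> Ht Hd; apply: leq_trans (@geom_le d q Hd); rewrite /Nle.
by apply: leq_sum => j _; apply: Nlev_le.
Qed.
Local Open Scope ring_scope.
Lemma real_ineq (R : realType) (P L x K : R) : 1 <= P -> 0 < L -> 2 <= x ->
  P * L * x <= K -> K <= P * L * (x + 1) ->
  (P - 1) * L * (x * (x + 1)) / 2 - x * K <= - (4 * P * L)^-1 * K ^+ 2.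
Proof.
move=> HP HL Hx H1 H2.
set a := P * L in H1 H2 *.
have Ha : 0 < a by rewrite /a; apply: mulr_gt0 => //; lra.
have E1 : (K - a * x) * (K - a * (x + 1)) <= 0.
  by apply: mulr_ge0_le0; lra.
have E2 : a * K * (1 - 2 * x) <= a * (a * x) * (1 - 2 * x).
  apply: ler_wnM2r; first lra.
  by rewrite ler_pM2l.
have E3 : 0 <= L * L * x * (x + 1) by apply: mulr_ge0; [apply: mulr_ge0; [nra|lra]|lra].
have E4 : 0 <= P * (L * L * x * (x + 1)) by apply: mulr_ge0; lra.
have G : 4 * a * ((P - 1) * L * (x * (x + 1)) / 2 - x * K) + K ^+ 2 <= 0.
  have -> : 4 * a * ((P - 1) * L * (x * (x + 1)) / 2 - x * K) + K ^+ 2 =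
     (K - a * x) * (K - a * (x + 1)) + a * K * (1 - 2 * x) + a * a * x * (x + 1)
     - 2 * (P * (L * L * x * (x + 1))) by rewrite /a; field.
  nra.
have H4 : 0 < 4 * a by lra.
rewrite -subr_ge0.
have -> : - (4 * P * L)^-1 * K ^+ 2 - ((P - 1) * L * (x * (x + 1)) / 2 - x * K) =
   - (4 * a * ((P - 1) * L * (x * (x + 1)) / 2 - x * K) + K ^+ 2) / (4 * a).
  by rewrite /a; field; apply/andP; split; lra.
by apply: divr_ge0; lra.
Qed.

Theorem lemma6p4 (R : realType) (d p k : nat) (T : tree) :
  (2 <= d)%N -> (1 <= p)%N -> (d ^ (6 * p) <= k)%N -> in_Ck d k T ->
  `|1 - phi R d p k T| <= expR (- cdp R d p * (ln (k%:R : R)) ^+ 2).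
Proof.
move=> Hd Hp Hk /andP [HT /eqP HI].
have Hk0 : (0 < k)%N by apply: leq_trans Hk; rewrite expn_gt0; apply/orP; left; lia.
set L := ln (d%:R : R).
set K := ln (k%:R : R).
have HL : 0 < L by apply: ln_gt0; rewrite ltr1n.
set u := fun m : nat => ((Nle T (m * (p - 1)))%:R / (d * k + 1)%:R : R).
have HD : 0 < ((d * k + 1)%:R : R) by rewrite ltr0n addn1.
have hu0 m : 0 <= u m by rewrite /u divr_ge0.
have hu1 m : u m <= 1.
  rewrite /u ler_pdivrMr // mul1r ler_nat.
  have := Nlesum_le T (m * (p - 1)).+1; rewrite (@vert_dcat d T HT) HI.
  by rewrite /Nle.
have hub m : u m <= expR ((m * (p - 1))%:R * L - K).
  rewrite expRD expRN mulr_natl -lnXn ?ltr0n; last lia.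
  rewrite /K !lnK ?posrE ?ltr0n ?exprn_gt0 ?ltr0n //; last lia.
  rewrite /u ler_pdivrMr // mulrAC ler_pdivlMr ?ltr0n // -!natrX -!natrM ler_nat.
  have H1 := @Nle_le2 d T (m * (p - 1)) HT Hd.
  move: H1; set X := (d ^ _)%N; set N := Nle _ _ => H1.
  apply: (@leq_trans (2 * X * k)%N); first by rewrite leq_mul2r H1 orbT.
  nia.
set Pm := fun M : nat => \prod_(1 <= m < M.+1) u m.
have P0 M0 : 0 <= Pm M0 by apply: prodr_ge0.
have Pdec : {homo Pm : i j / (i <= j)%N >-> j <= i}.
  apply: (@homo_leq _ Pm (fun a b => b <= a)) => //.
    by move=> y x z Hxy Hyz; exact: le_trans Hyz Hxy.
  move=> i; rewrite /Pm big_nat_recr //=.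
  exact: (ler_piMr (P0 i) (hu1 _)).
have Pcvg : cvgn Pm.
  by apply: nonincreasing_is_cvgn => //; exists 0 => _ [n _ <-]; exact: P0.
have lim0 : 0 <= limn Pm by apply: limr_ge => //; apply: nearW.
have Pexp M0 : Pm M0 <= expR (\sum_(1 <= m < M0.+1) ((m * (p - 1))%:R * L - K)).
  by rewrite expR_sum; apply: ler_prod => m _; rewrite hu0 hub.
have Sum M0 : \sum_(1 <= m < M0.+1) ((m * (p - 1))%:R * L - K) =
    ((p%:R : R) - 1) * L * (M0%:R * (M0%:R + 1)) / 2 - M0%:R * K.
  elim: M0 => [|M0 IH]; first by rewrite big_geq //; field.
  rewrite big_nat_recr //= IH natrM natrB // -addn1 natrD; by field.
set M := trunc_log (d ^ p) k.
have Hdp : (1 < d ^ p)%N by rewrite -(expn0 d) ltn_exp2l; lia.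
have HM := trunc_log_bounds Hdp Hk0; rewrite -/M in HM.
case/andP: HM => HM1 HM2.
have HM6 : (6 <= M)%N by apply: trunc_log_max => //; rewrite -expnM mulnC.
have HK1 : p%:R * L * M%:R <= K.
  rewrite /K /L mulrAC -natrM mulr_natl -lnXn ?ltr0n; last lia.
  rewrite ler_ln ?posrE ?exprn_gt0 ?ltr0n //; last lia.
  by rewrite -natrX ler_nat expnM.
have HK2 : K <= p%:R * L * (M%:R + 1).
  rewrite /K /L natr1 mulrAC -natrM mulr_natl -lnXn ?ltr0n; last lia.
  rewrite ler_ln ?posrE ?exprn_gt0 ?ltr0n //; last lia.
  by rewrite -natrX ler_nat expnM ltnW.
have -> : 1 - phi R d p k T = limn Pm by rewrite /phi /infprod1 opprB addrC subrK.
rewrite ger0_norm //.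
apply: le_trans (nonincreasing_cvgn_ge Pdec Pcvg M) _.
apply: le_trans (Pexp M) _.
rewrite ler_expR Sum /cdp.
apply: real_ineq => //; first by rewrite ler1n.
by rewrite (ler_nat R 2 M); lia.
Qed.
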